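(* Let $(G,G^+)$ be a simple Riesz group, and let $I=(q_i)_{i\ge1}$ be an increasing sequence of non-negative integers with $\gcd(q_i,q_j)=1$ for all $i\neq j$. Suppose that for every $i$ there is a countably generated interval $D_i$ in $G^+$ with $tD_i\neq G^+$ for every positive integer $t\le q_i-1$ and $q_iD_i=G^+$. Then there exists a sequence $(X_i)_{i\ge1}$ of countably generated intervals in $G^+$, descending in the algebraic ordering of the monoid of countably generated intervals (i.e. for each $i$ there is a countably generated interval $Y_i$ with $X_{i+1}+Y_i=X_i$), such that $tX_i\neq G^+$ for every positive integer $t\le q_i-1$ and $\left(\prod_{j=1}^i q_j\right)X_i=G^+$.
   Context: $(G,G^+)$ partially ordered abelian group; simple: $G\neq0$ and every nonzero element of $G^+$ is an order-unit. Riesz group: $x\le y_1+y_2$ in $G^+$ implies $x=x_1+x_2$ with $x_j\in G^+$, $x_j\le y_j$. An interval in $G^+$ is a nonempty, upward directed, order-hereditary subset of $G^+$; countably generated if it has a countable cofinal subset. Intervals form a monoid with $X+Y=\{z\in G^+: z\le x+y,\ x\in X,\ y\in Y\}$; $tX$ is the $t$-fold sum. *)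

(* Defs.v *)
From HB Require Import structures.
From mathcomp Require Import all_boot all_algebra.
From mathcomp Require Import boolp classical_sets.
Set Implicit Arguments. Unset Strict Implicit. Unset Printing Implicit Defensive.
Import GRing.Theory.
Local Open Scope ring_scope.
Local Open Scope classical_set_scope.

Section PO.
Variable G : zmodType.
Variable Gp : set G.

Definition po_group : Prop :=
  [/\ Gp 0, (forall x y, Gp x -> Gp y -> Gp (x + y))
    & (forall x, Gp x -> Gp (- x) -> x = 0)].

Definition ple (x y : G) : Prop := Gp (y - x).

Definition order_unit (u : G) : Prop :=
  Gp u /\ forall x : G, exists n : nat, ple x (u *+ n).

Definition simple_po : Prop :=
  (exists x : G, x <> 0) /\ (forall u, Gp u -> u <> 0 -> order_unit u).

Definition riesz : Prop :=
  forall x y1 y2, Gp x -> Gp y1 -> Gp y2 -> ple x (y1 + y2) ->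
    exists x1 x2, [/\ Gp x1, Gp x2, x = x1 + x2, ple x1 y1 & ple x2 y2].

Definition interval (X : set G) : Prop :=
  [/\ X `<=` Gp, (exists x, X x),
      (forall x y, X x -> X y -> exists2 z, X z & ple x z /\ ple y z)
    & (forall x y, X x -> Gp y -> ple y x -> X y)].

(* countably generated: has a countable cofinal subset
   (a nonempty countable set is the range of a sequence) *)
Definition ctbly_generated_interval (X : set G) : Prop :=
  interval X /\
  exists f : nat -> G, (forall n, X (f n)) /\ (forall x, X x -> exists n, ple x (f n)).

Definition int_add (X Y : set G) : set G :=
  [set z | Gp z /\ exists x y, [/\ X x, Y y & ple z (x + y)]].

Fixpoint int_mul (t : nat) (X : set G) : set G :=
  match t with
  | O => [set 0]
  | S t' => int_add X (int_mul t' X)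
  end.

End PO.

(* Main.v *)
Require Import Defs.
From mathcomp Require Import all_boot all_algebra.
From mathcomp Require Import boolp classical_sets.
Set Implicit Arguments. Unset Strict Implicit. Unset Printing Implicit Defensive.
Import GRing.Theory.
Local Open Scope ring_scope.
Local Open Scope classical_set_scope.

Lemma Gp0 (G : zmodType) (Gp : set G) : po_group Gp -> Gp 0.
Proof. by case. Qed.
Lemma GpD (G : zmodType) (Gp : set G) : po_group Gp -> forall x y, Gp x -> Gp y -> Gp (x + y).
Proof. by case. Qed.
Lemma ple_refl (G : zmodType) (Gp : set G) : po_group Gp -> forall x, ple Gp x x.
Proof. by move=> h x; rewrite /ple subrr; apply: Gp0. Qed.
Lemma ple_trans (G : zmodType) (Gp : set G) : po_group Gp -> forall x y z, ple Gp x y -> ple Gp y z -> ple Gp x z.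
Proof.
move=> h x y z; rewrite /ple => h1 h2.
have -> : z - x = (z - y) + (y - x) by rewrite addrA subrK.
exact: GpD.
Qed.
Lemma pleD (G : zmodType) (Gp : set G) : po_group Gp -> forall a b c d, ple Gp a b -> ple Gp c d -> ple Gp (a + c) (b + d).
Proof.
move=> h a b c d; rewrite /ple => h1 h2.
have -> : b + d - (a + c) = (b - a) + (d - c).
  by rewrite opprD addrACA.
exact: GpD.
Qed.
Lemma ple0 (G : zmodType) (Gp : set G) x : ple Gp 0 x = Gp x.
Proof. by rewrite /ple subr0. Qed.
Lemma GpMn (G : zmodType) (Gp : set G) : po_group Gp -> forall x n, Gp x -> Gp (x *+ n).
Proof.
move=> h x n hx; elim: n => [|n IH]; first by rewrite mulr0n; apply: Gp0.
by rewrite mulrS; apply: GpD.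
Qed.
Lemma pleMn (G : zmodType) (Gp : set G) : po_group Gp -> forall a b n, ple Gp a b -> ple Gp (a *+ n) (b *+ n).
Proof. by move=> h a b n; rewrite /ple -mulrnBl; apply: GpMn. Qed.
Lemma ple_addr (G : zmodType) (Gp : set G) : forall x y, Gp y -> ple Gp x (x + y).
Proof. by move=> x y; rewrite /ple addrAC subrr add0r. Qed.
Lemma ple_addl (G : zmodType) (Gp : set G) : forall x y, Gp y -> ple Gp x (y + x).
Proof. by move=> x y; rewrite addrC; apply: ple_addr. Qed.
Lemma ple_antisym (G : zmodType) (Gp : set G) : po_group Gp -> forall x y, ple Gp x y -> ple Gp y x -> x = y.
Proof.
case=> _ _ h x y; rewrite /ple => h1 h2.
have := h (y - x) h1; rewrite opprB => /(_ h2) /eqP; rewrite subr_eq0 => /eqP; by [].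
Qed.
Lemma pleMn_n (G : zmodType) (Gp : set G) : po_group Gp -> forall x m n, Gp x -> (m <= n)%N -> ple Gp (x *+ m) (x *+ n).
Proof.
move=> h x m n hx hmn; rewrite /ple -mulrnBr //; exact: GpMn.
Qed.

Lemma int_mul_sub (G : zmodType) (Gp : set G) : po_group Gp -> forall t X, int_mul Gp t X `<=` Gp.
Proof. move=> h [|t] X z /=; [by move=> ->; apply: Gp0 | by case]. Qed.

Lemma int_mul_mono (G : zmodType) (Gp : set G) : forall t (X Y : set G), X `<=` Y -> int_mul Gp t X `<=` int_mul Gp t Y.
Proof.
move=> t X Y hXY; elim: t => [|t IH] z //= [hz [x [y [hx hy hle]]]].
by split=> //; exists x, y; split=> //; [apply: hXY | apply: IH].
Qed.

Lemma int_mul_le (G : zmodType) (Gp : set G) : po_group Gp -> forall X, Defs.interval Gp X ->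
  forall t z, int_mul Gp t X z -> exists d, X d /\ ple Gp z (d *+ t).
Proof.
move=> h X [hsub [x0 hx0] hdir hher]; elim=> [|t IH] z /=.
  by move=> ->; exists x0; split=> //; rewrite mulr0n; apply: ple_refl.
case=> hz [x [y [hx hy hle]]].
have [d [hd hyd]] := IH _ hy.
have [d' hd' [h1 h2]] := hdir _ _ hx hd.
exists d'; split=> //; rewrite mulrS; apply: ple_trans hle _ => //.
apply: pleD => //; apply: ple_trans hyd _ => //; exact: pleMn.
Qed.

Lemma le_int_mul (G : zmodType) (Gp : set G) : po_group Gp -> forall X, Defs.interval Gp X ->
  forall t d z, X d -> Gp z -> ple Gp z (d *+ t) -> int_mul Gp t X z.
Proof.
move=> h X [hsub _ _ hher] t d; elim: t => [|t IH] z hd hz /=.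
  rewrite mulr0n => hle; apply: (ple_antisym h) => //; by rewrite ple0.
rewrite mulrS => hle; split=> //; exists d, (d *+ t); split=> //.
apply: IH => //; [exact: (GpMn h _ (hsub _ hd)) | exact: ple_refl].
Qed.

Lemma interp (G : zmodType) (Gp : set G) : po_group Gp -> riesz Gp -> forall a1 a2 b1 b2,
  ple Gp a1 b1 -> ple Gp a1 b2 -> ple Gp a2 b1 -> ple Gp a2 b2 ->
  exists c, [/\ ple Gp a1 c, ple Gp a2 c, ple Gp c b1 & ple Gp c b2].
Proof.
move=> h hr a1 a2 b1 b2 h11 h12 h21 h22.
have hle : ple Gp (b1 - a1) ((b1 - a2) + (b2 - a1)).
  rewrite /ple.
  have -> : b1 - a2 + (b2 - a1) - (b1 - a1) = b2 - a2.
    rewrite opprB [b1 - a2 + _]addrC -!addrA; congr (_ + _).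
    by rewrite [b1 + _]addrCA [b1 + _]addrCA subrr addr0 addrCA addNr addr0.
  done.
have [u1 [u2 [hu1 hu2 hu hu1v hu2v]]] := hr _ _ _ h11 h21 h12 hle.
have e2 : u2 = b1 - a1 - u1 by rewrite hu [u1 + u2]addrC addrK.
have ec : a1 + u2 = b1 - u1 by rewrite e2 addrA [a1 + _]addrC subrK.
exists (a1 + u2); split.
- exact: ple_addr.
- by rewrite ec /ple addrAC.
- by rewrite ec /ple opprB addrCA subrr addr0.
- by rewrite /ple opprD addrA.
Qed.

Lemma L3 (G : zmodType) (Gp : set G) : po_group Gp -> riesz Gp -> forall e d, Gp e -> Gp d ->
  forall q z, Gp z -> ple Gp z e -> ple Gp z (d *+ q) ->
  exists p, [/\ Gp p, ple Gp p e, ple Gp p d & ple Gp z (p *+ q)].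
Proof.
move=> h hr e d he hd; elim=> [|q IH] z hz hze hzd.
  exists 0; split; [exact: Gp0 | by rewrite ple0 | by rewrite ple0 | ].
  by move: hzd; rewrite !mulr0n.
rewrite mulrS in hzd.
have [a [b [ha hb hab had hbd]]] := hr _ _ _ hz hd (GpMn h q hd) hzd.
have hbz : ple Gp b z by rewrite hab; apply: ple_addl.
have haz : ple Gp a z by rewrite hab; apply: ple_addr.
have [pb [hpb hpbe hpbd hbpb]] := IH b hb (ple_trans h hbz hze) hbd.
have [c [hac hpbc hce hcd]] := interp h hr (ple_trans h haz hze) had hpbe hpbd.
exists c; split=> //.
- by rewrite -ple0; apply: (ple_trans h) hac; rewrite ple0.
- rewrite hab mulrS; apply: pleD => //; apply: (ple_trans h) hbpb _ => //; exact: pleMn.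
Qed.

Lemma L2 (G : zmodType) (Gp : set G) : po_group Gp -> riesz Gp -> forall e d, Gp e -> Gp d ->
  forall q Q z, Gp z -> ple Gp z (e *+ Q) -> ple Gp z (d *+ q) ->
  exists p, [/\ Gp p, ple Gp p e, ple Gp p d & ple Gp z (p *+ (Q * q))].
Proof.
move=> h hr e d he hd q; elim=> [|Q IH] z hz hze hzd.
  exists 0; split; [exact: Gp0 | by rewrite ple0 | by rewrite ple0 | ].
  by move: hze; rewrite mul0rn mulr0n.
rewrite mulrS in hze.
have [z1 [z2 [hz1 hz2 hz12 h1 h2]]] := hr _ _ _ hz he (GpMn h Q he) hze.
have hz2z : ple Gp z2 z by rewrite hz12; apply: ple_addl.
have hz1z : ple Gp z1 z by rewrite hz12; apply: ple_addr.
have [p1 [hp1 hp1e hp1d hz1p]] := L3 h hr he hd hz1 h1 (ple_trans h hz1z hzd).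
have [p2 [hp2 hp2e hp2d hz2p]] := IH z2 hz2 h2 (ple_trans h hz2z hzd).
have [c [h1c h2c hce hcd]] := interp h hr hp1e hp1d hp2e hp2d.
exists c; split=> //.
- by rewrite -ple0; apply: (ple_trans h) h1c; rewrite ple0.
- rewrite hz12 mulSn mulrnDr; apply: pleD => //.
  + apply: (ple_trans h) hz1p _ => //; exact: pleMn.
  + apply: (ple_trans h) hz2p _ => //; exact: pleMn.
Qed.

Lemma ple_subr (G : zmodType) (Gp : set G) a b c : ple Gp a (b - c) = ple Gp (c + a) b.
Proof. by rewrite /ple opprD addrA. Qed.

Lemma eq4 (G : zmodType) (a b c d : G) : (a - b - c) + (b - d) = a - (d + c).
Proof.
by rewrite [in RHS]opprD [in RHS]addrA addrAC -[LHS]addrA [- c + _]addrC [LHS]addrA -[a - b + (b - d)]addrA addKr addrAC.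
Qed.

Lemma mono_seq (G : zmodType) (Gp : set G) : po_group Gp -> forall s : nat -> G,
  (forall n, ple Gp (s n) (s n.+1)) -> forall m n, (m <= n)%N -> ple Gp (s m) (s n).
Proof.
move=> h s hs m; elim=> [|n IH] hmn.
  by move: hmn; rewrite leqn0 => /eqP ->; apply: ple_refl.
move: hmn; rewrite leq_eqVlt => /orP [/eqP -> | hlt]; first exact: ple_refl.
exact: (ple_trans h (IH hlt) (hs n)).
Qed.

Definition hull (G : zmodType) (Gp : set G) (s : nat -> G) : set G :=
  [set z | Gp z /\ exists k, ple Gp z (s k)].

Lemma hull_ctbly (G : zmodType) (Gp : set G) : po_group Gp -> forall s : nat -> G,
  (forall n, Gp (s n)) -> (forall n, ple Gp (s n) (s n.+1)) ->
  ctbly_generated_interval Gp (hull Gp s).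
Proof.
move=> h s hGp hs.
have hin : forall k, hull Gp s (s k) by move=> k; split=> //; exists k; apply: ple_refl.
split; last by exists s; split=> // z [_ [k hk]]; exists k.
split.
- by move=> z [].
- by exists (s 0).
- move=> a b [ha [k hk]] [hb [m hm]]; exists (s (maxn k m)) => //; split.
  + apply: (ple_trans h hk); apply: mono_seq => //; exact: leq_maxl.
  + apply: (ple_trans h hm); apply: mono_seq => //; exact: leq_maxr.
- move=> a b [ha [k hk]] hb hba; split=> //; exists k; exact: (ple_trans h hba hk).
Qed.

Lemma hull_eq (G : zmodType) (Gp : set G) : po_group Gp -> forall (X : set G) (s : nat -> G),
  Defs.interval Gp X -> (forall n, X (s n)) -> (forall z, X z -> exists k, ple Gp z (s k)) ->
  hull Gp s = X.
Proof.
move=> h X s [hsub _ _ hher] hs hcof; apply/seteqP; split.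
- move=> z [hz [k hk]]; exact: hher (hs k) hz hk.
- move=> z hz; split; [exact: hsub | exact: hcof].
Qed.

Lemma hull_add (G : zmodType) (Gp : set G) : po_group Gp -> forall s t : nat -> G,
  (forall n, Gp (s n)) -> (forall n, Gp (t n)) ->
  (forall n, ple Gp (s n) (s n.+1)) -> (forall n, ple Gp (t n) (t n.+1)) ->
  int_add Gp (hull Gp s) (hull Gp t) = hull Gp (fun n => s n + t n).
Proof.
move=> h s t hs0 ht0 hs ht; apply/seteqP; split.
- move=> z [hz [a [b [[ha [k hk]] [hb [m hm]] hab]]]]; split=> //.
  exists (maxn k m); apply: (ple_trans h hab); apply: pleD => //.
  + apply: (ple_trans h hk); apply: mono_seq => //; exact: leq_maxl.
  + apply: (ple_trans h hm); apply: mono_seq => //; exact: leq_maxr.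
- move=> z [hz [k hk]]; split=> //; exists (s k), (t k); split=> //.
  + by split=> //; exists k; apply: ple_refl.
  + by split=> //; exists k; apply: ple_refl.
Qed.

Lemma incr_cofinal (G : zmodType) (Gp : set G) : po_group Gp -> forall X : set G,
  ctbly_generated_interval Gp X ->
  exists x : nat -> G, [/\ (forall n, X (x n)), (forall n, ple Gp (x n) (x n.+1))
    & (forall z, X z -> exists n, ple Gp z (x n))].
Proof.
move=> h X [[hsub [x0 hx0] hdir hher] [f [hf hcof]]].
have : forall ab : G * G, exists c : G, X ab.1 -> X ab.2 ->
    [/\ X c, ple Gp ab.1 c & ple Gp ab.2 c].
  move=> [a b] /=; have [[ha hb]|hn] := pselect (X a /\ X b).
    by have [c hc [h1 h2]] := hdir _ _ ha hb; exists c.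
  by exists a => ha hb; case: hn.
case/choice=> ub hub.
pose x := fix x n := if n is n'.+1 then ub (x n', f n) else f 0.
have hx : forall n, X (x n).
  elim=> [|n IH] //=; by have [] := hub (x n, f n.+1) IH (hf _).
exists x; split=> //.
- by move=> n /=; have [] := hub (x n, f n.+1) (hx n) (hf _).
- move=> z hz; have [n hn] := hcof z hz; exists n; apply: (ple_trans h hn).
  case: n {hn} => [|n] /=; first exact: ple_refl.
  by have [] := hub (x n, f n.+1) (hx n) (hf _).
Qed.

Lemma eq5 (G : zmodType) (a b c d : G) : (a - (d + c)) - (b - d) = a - b - c.
Proof. by rewrite -(eq4 a b c d) addrK. Qed.

Lemma step (G : zmodType) (Gp : set G) : po_group Gp -> riesz Gp ->
  forall (X D : set G) (Q q : nat),
  ctbly_generated_interval Gp X -> int_mul Gp Q X = Gp ->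
  ctbly_generated_interval Gp D -> int_mul Gp q D = Gp ->
  exists X' Y : set G, [/\ ctbly_generated_interval Gp X', ctbly_generated_interval Gp Y,
    int_add Gp X' Y = X, X' `<=` D & int_mul Gp (Q * q) X' = Gp].
Proof.
move=> h hr X D Q q hX hQX hD hqD.
have [x [hx hxinc hxcof]] := incr_cofinal h hX.
have hXi := hX.1.
have [hDsub [d00 hd00] hDdir hDher] := hD.1.
have [hXsub _ _ _] := hXi.
have hxm := mono_seq h hxinc.
have hxGp : forall n, Gp (x n) by move=> n; exact: hXsub.
have S : forall K y g, D y -> Gp y -> ple Gp y (x K) -> Gp g ->
    exists K' p, [/\ (K < K')%N, Gp p, ple Gp p (x K' - x K), D (y + p)
       & ple Gp g (p *+ (Q * q))].
  move=> K y g hDy hy hyK hg.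
  have : int_mul Gp q D (g + y *+ q) by rewrite hqD; apply: GpD => //; exact: GpMn.
  move/(int_mul_le h hD.1) => [d0 [hd0 hle0]].
  have [d hd [hd0d hyd]] := hDdir _ _ hd0 hDy.
  have hg1 : ple Gp g ((d - y) *+ q).
    rewrite mulrnBl ple_subr addrC; apply: (ple_trans h hle0); exact: pleMn.
  have : int_mul Gp Q X (g + x K *+ Q) by rewrite hQX; apply: GpD => //; exact: GpMn.
  move/(int_mul_le h hXi) => [x0 [hx0 hle1]].
  have [n0 hn0] := hxcof _ hx0.
  pose K' := maxn n0 K.+1.
  have hg2 : ple Gp g ((x K' - x K) *+ Q).
    rewrite mulrnBl ple_subr addrC; apply: (ple_trans h hle1); apply: pleMn => //.
    apply: (ple_trans h hn0); apply: hxm; exact: leq_maxl.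
  have hKK' : (K < K')%N by rewrite leq_max leqnn orbT.
  have he : Gp (x K' - x K) by have := hxm K K' (ltnW hKK').
  have [p [hp hpe hpd hgp]] := L2 h hr he hyd hg hg2 hg1.
  exists K', p; split=> //.
  apply: (hDher _ _ hd); first exact: GpD.
  by rewrite -ple_subr.
have : forall t : nat * G * G, exists u : nat * G,
    D t.1.2 -> Gp t.1.2 -> ple Gp t.1.2 (x t.1.1) -> Gp t.2 ->
    [/\ (t.1.1 < u.1)%N, Gp u.2, ple Gp u.2 (x u.1 - x t.1.1), D (t.1.2 + u.2)
       & ple Gp t.2 (u.2 *+ (Q * q))].
  move=> [[K y] g] /=.
  have [[h1 h2 h3 h4]|hn] := pselect [/\ D y, Gp y, ple Gp y (x K) & Gp g].
    by have [K' [p hKp]] := S K y g h1 h2 h3 h4; exists (K', p).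
  by exists (0%N, 0) => h1 h2 h3 h4; case: hn.
case/choice=> F hF.
pose st := fix st n := if n is n'.+1 then
   ((F ((st n').1, (st n').2, x n' *+ Q)).1, (st n').2 + (F ((st n').1, (st n').2, x n' *+ Q)).2)
   else (0%N, 0).
pose y n := (st n).2.
pose K n := (st n).1.
have hinv : forall n, [/\ D (y n), Gp (y n) & ple Gp (y n) (x (K n))].
  elim=> [|n [h1 h2 h3]].
    rewrite /y /K /=; split; [|exact: Gp0| by rewrite ple0].
    by apply: (hDher _ _ hd00); [exact: Gp0 | rewrite ple0; exact: hDsub].
  have [h4 h5 h6 h7 h8] := hF (K n, y n, x n *+ Q) h1 h2 h3 (GpMn h _ (hxGp n)).
  rewrite /y /K /=; split=> //; first exact: GpD.
  by rewrite /ple -(eq4 _ (x (K n))); apply: GpD.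
have hF' : forall n, [/\ (K n < K n.+1)%N, Gp (y n.+1 - y n), ple Gp (y n.+1 - y n) (x (K n.+1) - x (K n)),
     y n.+1 = y n + (y n.+1 - y n) & ple Gp (x n *+ Q) ((y n.+1 - y n) *+ (Q * q))].
  move=> n; have [h1 h2 h3] := hinv n.
  have [h4 h5 h6 h7 h8] := hF (K n, y n, x n *+ Q) h1 h2 h3 (GpMn h _ (hxGp n)).
  have e : y n.+1 - y n = (F (K n, y n, x n *+ Q)).2.
    by rewrite /y /= addrC addKr.
  by rewrite e; split=> //; rewrite -e addrC subrK.
pose r n := x (K n) - y n.
have hyGp : forall n, Gp (y n) by move=> n; have [] := hinv n.
have hrGp : forall n, Gp (r n) by move=> n; have [] := hinv n.
have hyinc : forall n, ple Gp (y n) (y n.+1).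
  move=> n; have [_ h2 _ h4 _] := hF' n; rewrite h4; exact: ple_addr.
have hrinc : forall n, ple Gp (r n) (r n.+1).
  move=> n; have [_ h2 h3 h4 _] := hF' n.
  rewrite /ple /r h4 eq5; exact: h3.
have hKn : forall n, (n <= K n)%N.
  elim=> [|n IH] //; have [h1 _ _ _ _] := hF' n; exact: leq_ltn_trans IH h1.
have hX' := hull_ctbly h hyGp hyinc.
exists (hull Gp y), (hull Gp r); split.
- exact: hX'.
- exact: hull_ctbly.
- rewrite hull_add //.
  have -> : (fun n => y n + r n) = (fun n => x (K n)).
    by apply: funext => n; rewrite /r addrC subrK.
  apply: hull_eq => // z hz; have [m hm] := hxcof z hz; exists m.
  exact: (ple_trans h hm (hxm _ _ (hKn m))).
- move=> z [hz [k hk]]; have [h1 _ _] := hinv k; exact: hDher h1 hz hk.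
- apply/seteqP; split; first exact: int_mul_sub.
  move=> z hz; have hz' : int_mul Gp Q X z by rewrite hQX.
  move: hz' => /(int_mul_le h hXi) [x0 [hx0 hle]].
  have [m hm] := hxcof _ hx0.
  apply: (@le_int_mul _ _ h _ hX'.1 (Q * q) (y m.+1) z).
  + by split=> //; exists m.+1; apply: ple_refl.
  + exact: hz.
  + apply: (ple_trans h hle); apply: (ple_trans h (pleMn h Q hm)).
    have [_ _ _ h4 h5] := hF' m.
    apply: (ple_trans h h5); apply: pleMn => //; rewrite [X in ple _ _ X]h4; exact: ple_addl.
Qed.
Local Close Scope ring_scope.

Theorem proposition3p5 (G : zmodType) (Gp : set G)
  (hpo : po_group Gp) (hsimple : simple_po Gp) (hriesz : riesz Gp)
  (q : nat -> nat)
  (hinc : forall i j, (i < j)%N -> (q i < q j)%N)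
  (hcop : forall i j, i <> j -> gcdn (q i) (q j) = 1%N)
  (D : nat -> set G)
  (hD : forall i, ctbly_generated_interval Gp (D i))
  (hDt : forall i t, (0 < t)%N -> (t <= (q i).-1)%N -> int_mul Gp t (D i) <> Gp)
  (hDq : forall i, int_mul Gp (q i) (D i) = Gp) :
  exists X : nat -> set G,
    [/\ (forall i, ctbly_generated_interval Gp (X i)),
        (forall i, exists Y : set G,
            ctbly_generated_interval Gp Y /\ int_add Gp (X i.+1) Y = X i),
        (forall i t, (0 < t)%N -> (t <= (q i).-1)%N -> int_mul Gp t (X i) <> Gp)
      & (forall i, int_mul Gp (\prod_(j < i.+1) q j)%N (X i) = Gp)].
Proof.
have : forall t : set G * nat, exists X' : set G,
    ctbly_generated_interval Gp t.1 -> int_mul Gp (\prod_(j < t.2.+1) q j)%N t.1 = Gp ->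
    [/\ ctbly_generated_interval Gp X',
        (exists Y, ctbly_generated_interval Gp Y /\ int_add Gp X' Y = t.1),
        X' `<=` D t.2.+1 & int_mul Gp (\prod_(j < t.2.+2) q j)%N X' = Gp].
  move=> [X i] /=.
  have [[h1 h2]|hn] := pselect (ctbly_generated_interval Gp X /\
      int_mul Gp (\prod_(j < i.+1) q j)%N X = Gp).
    have [X' [Y [c1 c2 c3 c4 c5]]] := step hpo hriesz h1 h2 (hD i.+1) (hDq i.+1).
    exists X' => _ _; split=> //; first by exists Y.
    by rewrite big_ord_recr.
  by exists X => h1 h2; case: hn.
case/choice=> F hF.
pose Xs := fix Xs i := if i is i'.+1 then F (Xs i', i') else D 0.
have hinv : forall i, [/\ ctbly_generated_interval Gp (Xs i),
    int_mul Gp (\prod_(j < i.+1) q j)%N (Xs i) = Gp & Xs i `<=` D i].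
  elim=> [|i [h1 h2 h3]].
    rewrite /=; split; [exact: (hD 0) | | by []].
    rewrite big_ord1; exact: hDq.
  by have [c1 c2 c3 c4] := hF (Xs i, i) h1 h2; split.
exists Xs; split.
- by move=> i; have [] := hinv i.
- move=> i; have [h1 h2 _] := hinv i.
  by have [_ c2 _ _] := hF (Xs i, i) h1 h2.
- move=> i t ht hti heq; apply: (hDt i t ht hti).
  have [_ _ h3] := hinv i.
  apply/seteqP; split; first exact: int_mul_sub.
  rewrite -{1}heq; exact: int_mul_mono.
- by move=> i; have [] := hinv i.
Qed.
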